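(* Let $\mathcal{S}=(Q,E,\delta,Q_0,\Sigma,\ell)$ be a labeled finite-state automaton, $Q_S\subset Q$ a set of secret states, and $K$ a positive integer. Then $\mathcal{S}$ is strongly $K$-step opaque with respect to $Q_S$ if and only if for every state $(q,x)$ reachable in the concurrent composition $\mathrm{CC}(\mathcal{S}_{\varepsilon},\mathcal{S}_{\mathrm{dss\,obs}}^{\varepsilon})$ with $q\in Q_S$, one has $x\neq\emptyset$, and for every run $(q,x)\xrightarrow{s'}(q',x')$ in $\mathrm{CC}(\mathcal{S}_{\varepsilon},\mathcal{S}_{\mathrm{dss\,obs}}^{\varepsilon})$ with $|\ell(s')|\le K$, one has $x'\neq\emptyset$.
   Context: A labeled finite-state automaton (LFSA) is $\mathcal{S}=(Q,E,\delta,Q_0,\Sigma,\ell)$ with finite state set $Q$, finite event alphabet $E$, transition relation $\delta\subset Q\times E\times Q$, initial states $Q_0\subset Q$, finite output alphabet $\Sigma$, and labeling $\ell:E\to\Sigma\cup\{\epsilon\}$ ($\epsilon$ the empty word). $E_o=\{e:\ell(e)\in\Sigma\}$, $E_{uo}=\{e:\ell(e)=\epsilon\}$. Runs $q\xrightarrow{s}q'$ for event words $s$ are defined by chaining transitions (empty word: $q=q'$); $\ell$ extends morphically to words. For $x\subset Q$, $\mathrm{UR}(x)=\{q':\exists q\in x, s\in E_{uo}^*, q\xrightarrow{s}q'\}$. A state is reachable in an automaton if it is initial or is reached by a nonempty run from an initial state. A run is non-secret if none of its states (including first and last) lies in $Q_S$. Strong $K$-step opacity: $\mathcal{S}$ is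 strongly $K$-step opaque w.r.t. $Q_S$ if for every run $q_0\xrightarrow{s_1}q_1\xrightarrow{s_2}q_2$ with $q_0\in Q_0$, $q_1\in Q_S$, $|\ell(s_2)|\le K$, there is a non-secret run $q_0'\xrightarrow{s_1'}q_1'\xrightarrow{s_2'}q_2'$ with $q_0'\in Q_0$, $\ell(s_1)=\ell(s_1')$, $\ell(s_2)=\ell(s_2')$. Concurrent composition: for LFSAs $\mathcal{S}^i=(Q_i,E,\delta_i,Q_{0i},\Sigma,\ell)$, $i=1,2$, $\mathrm{CC}(\mathcal{S}^1,\mathcal{S}^2)$ has states $Q_1\times Q_2$, initial states $Q_{01}\times Q_{02}$, events $\{(e,e'):e,e'\in E_o,\ell(e)=\ell(e')\}\cup\{(e,\epsilon):e\in E_{uo}\}\cup\{(\epsilon,e):e\in E_{uo}\}$, transitions $((q_1,q_1'),(e,e'),(q_2,q_2'))$ iff $(q_1,e,q_2)\in\delta_1,(q_1',e',q_2')\in\delta_2$; $((q_1,q_1'),(e,\epsilon),(q_2,q_1'))$ iff $(q_1,e,q_2)\in\delta_1$; $((q_1,q_1'),(\epsilon,e),(q_1,q_2'))$ iff $(q_1',e,q_2')\in\delta_2$. The label of $(e,e')$ is $\ell(e)$; of $(e,\epsilon),(\epsilon,e)$ it is $\epsilon$; $\ell(s')$ of a word $s'$ of composed events is the concatenation of labels. $\mathcal{S}_{\varepsilon}$: LFSA with states $Q$, initial states $Q_0$, events $\ell(E_o)\cup\{\varepsilon\}$ ($\varepsilon$ a fresh symbol), transition $(q,\ell(e),q')$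 for each $(q,e,q')\in\delta$ with $e\in E_o$ and $(q,\varepsilon,q')$ for each $(q,e,q')\in\delta$ with $e\in E_{uo}$; labeling $\ell'$ = identity on $\ell(E_o)$, $\ell'(\varepsilon)=\epsilon$. $\mathcal{S}_{\mathrm{dss}}$: the accessible part (states reachable from initial states) of the LFSA obtained from $\mathcal{S}$ by deleting all states in $Q_S$ and all transitions incident to them (initial states $Q_0\setminus Q_S$). Its observer $\mathcal{S}_{\mathrm{dss\,obs}}$ is the deterministic automaton with states the subsets of the states of $\mathcal{S}_{\mathrm{dss}}$, alphabet the observable labels, initial state the unobservable reach (within $\mathcal{S}_{\mathrm{dss}}$) of its initial states, and $\delta(x,a)$ = set of states reachable in $\mathcal{S}_{\mathrm{dss}}$ from some $q\in x$ by a word $e_as$ with $e_a$ observable, $\ell(e_a)=a$, $s$ unobservable (so $\delta(\emptyset,a)=\emptyset$). $\mathcal{S}_{\mathrm{dss\,obs}}^{\varepsilon}$ is this observer viewed as an LFSA with events $\ell(E_o)\cup\{\varepsilon\}$ (no $\varepsilon$-transitions) and labeling $\ell'$; $\mathrm{CC}(\mathcal{S}_{\varepsilon},\mathcal{S}_{\mathrm{dss\,obs}}^{\varepsilon})$ is formed with events $\ell(E_o)\cup\{\varepsilon\}$ and labeling $\ell'$. *)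

(* Defs.v *)
From mathcomp Require Import all_boot.
From mathcomp Require Import boolp.

Set Implicit Arguments.
Unset Strict Implicit.
Unset Printing Implicit Defensive.

(* A labeled finite-state automaton over event alphabet E and output alphabet
   Sig.  lab e = None encodes l(e) = epsilon (unobservable event). *)
Record lfsa (E Sig : finType) := Lfsa {
  st : finType;
  trans : st -> E -> st -> bool;
  init : {set st};
  lab : E -> option Sig
}.
Arguments st {E Sig} l.
Arguments trans {E Sig} l _ _ _.
Arguments init {E Sig} l.
Arguments lab {E Sig} l _.

Section Runs.
Variables (E Sig : finType) (A : lfsa E Sig).

(* A run from q is encoded as the list p of (event, next state) pairs. *)
Fixpoint is_run (q : st A) (p : seq (E * st A)) : bool :=
  match p with
  | [::] => true
  | (e, q') :: p' => trans A q e q' && is_run q' p'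
  end.

Definition run_end (q : st A) (p : seq (E * st A)) : st A := last q (map snd p).
Definition run_word (p : seq (E * st A)) : seq E := map fst p.
Definition run_states (q : st A) (p : seq (E * st A)) : seq (st A) := q :: map snd p.

Definition labw (s : seq E) : seq Sig := pmap (lab A) s.

Definition unobs (e : E) : bool := lab A e == None.

Definition reachable (q : st A) : Prop :=
  exists q0 p, q0 \in init A /\ is_run q0 p /\ run_end q0 p = q.

Definition UR (x : {set st A}) : {set st A} :=
  [set q' | `[< exists q p, q \in x /\ is_run q p /\ all unobs (run_word p)
                            /\ run_end q p = q' >]].

Definition strongly_K_step_opaque (QS : {set st A}) (K : nat) : Prop :=
  forall q0 p1 p2,
    q0 \in init A -> is_run q0 p1 -> run_end q0 p1 \in QS ->
    is_run (run_end q0 p1) p2 -> size (labw (run_word p2)) <= K ->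
    exists q0' p1' p2',
      q0' \in init A /\ is_run q0' p1' /\ is_run (run_end q0' p1') p2' /\
      all (fun r => r \notin QS) (run_states q0' p1' ++ map snd p2') /\
      labw (run_word p1') = labw (run_word p1) /\
      labw (run_word p2') = labw (run_word p2).

(* observer: deterministic automaton on subsets, events option Sig
   (None = the fresh symbol varepsilon, which has no transitions). *)
Definition obs_step (x : {set st A}) (a : Sig) : {set st A} :=
  [set q' | `[< exists q ea q1 p, q \in x /\ lab A ea = Some a /\
              is_run q ((ea, q1) :: p) /\ all unobs (run_word p) /\
              run_end q ((ea, q1) :: p) = q' >]].

Definition observer : lfsa ((option Sig : finType)) Sig :=
  @Lfsa ((option Sig : finType)) Sig {set st A}
    (fun x ev y => match ev with Some a => y == obs_step x a | None => false end)
    [set UR (init A)]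
    id.

End Runs.

Section Constructions.
Variables (E Sig : finType).

Definition S_eps (S : lfsa E Sig) : lfsa ((option Sig : finType)) Sig :=
  @Lfsa ((option Sig : finType)) Sig (st S)
    (fun q a q' => [exists e, trans S q e q' && (lab S e == a)])
    (init S)
    id.

Definition dss_acc (S : lfsa E Sig) (QS : {set st S}) : {set st S} :=
  [set q | `[< exists q0 p, q0 \in init S /\ is_run q0 p /\
             all (fun r => r \notin QS) (run_states q0 p) /\ run_end q0 p = q >]].

Definition S_dss (S : lfsa E Sig) (QS : {set st S}) : lfsa E Sig :=
  @Lfsa E Sig {q : st S | q \in dss_acc QS}
    (fun q e q' => trans S (val q) e (val q'))
    [set q | val q \in init S]
    (lab S).

Definition cc_valid (A B : lfsa E Sig) (ev : option E * option E) : bool :=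
  match ev with
  | (Some e, Some e') => (lab A e != None) && (lab A e == lab B e')
  | (Some e, None) => lab A e == None
  | (None, Some e) => lab B e == None
  | (None, None) => false
  end.

Definition CC (A B : lfsa E Sig) :
  lfsa (((option E * option E)%type : finType)) Sig :=
  @Lfsa (((option E * option E)%type : finType)) Sig
    ((st A * st B)%type : finType)
    (fun z ev z' => cc_valid A B ev &&
       match ev with
       | (Some e, Some e') => trans A z.1 e z'.1 && trans B z.2 e' z'.2
       | (Some e, None) => trans A z.1 e z'.1 && (z'.2 == z.2)
       | (None, Some e) => (z'.1 == z.1) && trans B z.2 e z'.2
       | (None, None) => false
       end)
    (setX (init A) (init B))
    (fun ev => match ev with (Some e, _) => lab A e | (None, _) => None end).

End Constructions.

(* Main.v *)
Require Import Defs.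
From mathcomp Require Import all_boot.
From mathcomp Require Import boolp.
Set Implicit Arguments.
Unset Strict Implicit.

Section Gen.
Variables (E Sig : finType) (A : lfsa E Sig).

Lemma is_run_cat (q : st A) p1 p2 :
  is_run q (p1 ++ p2) = is_run q p1 && is_run (run_end q p1) p2.
Proof. by elim: p1 q => [|[e q'] p IH] q //=; rewrite IH andbA. Qed.

Lemma run_end_cat (q : st A) p1 p2 :
  run_end q (p1 ++ p2) = run_end (run_end q p1) p2.
Proof. by rewrite /run_end map_cat last_cat. Qed.

Lemma run_end_cons (q : st A) e q' p : run_end q ((e, q') :: p) = run_end q' p.
Proof. by []. Qed.

Lemma labw_cat (p1 p2 : seq (E * st A)) :
  labw A (run_word (p1 ++ p2)) = labw A (run_word p1) ++ labw A (run_word p2).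
Proof. by rewrite /labw /run_word map_cat pmap_cat. Qed.

Lemma labw_cons e (q : st A) p :
  labw A (run_word ((e, q) :: p)) =
  if lab A e is Some a then a :: labw A (run_word p) else labw A (run_word p).
Proof. by rewrite /labw /=; case: (lab A e). Qed.

Lemma labw_unobs (p : seq (E * st A)) :
  all (unobs A) (run_word p) -> labw A (run_word p) = [::].
Proof.
elim: p => [|[e q] p IH] // /andP [/eqP he hp].
by rewrite labw_cons he IH.
Qed.

Lemma labw_split (p : seq (E * st A)) u v :
  labw A (run_word p) = u ++ v ->
  exists p1 p2, p = p1 ++ p2 /\ labw A (run_word p1) = u /\ labw A (run_word p2) = v.
Proof.
elim: p u => [|[e q] p IH] u.
  case: u => [|a u] //= h; by exists [::], [::].
case: u => [|a u] h.
  by exists [::], ((e, q) :: p).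
move: h; rewrite labw_cons; case he: (lab A e) => [b|] h.
  case: h => <- h'.
  have [p1 [p2 [-> [h1 h2]]]] := IH u h'.
  by exists ((e, q) :: p1), p2; rewrite labw_cons he h1.
have [p1 [p2 [-> [h1 h2]]]] := IH (a :: u) h.
by exists ((e, q) :: p1), p2; rewrite labw_cons he h1.
Qed.

End Gen.
Set Implicit Arguments.
Unset Strict Implicit.

Section Spec.
Variables (E Sig : finType) (S : lfsa E Sig) (QS : {set st S}).
Local Notation D := (S_dss QS).
Local Notation C := (CC (S_eps S) (observer D)).

Lemma P1 (p : seq (_ * st C)) (z : st C) : is_run z p ->
  (run_end z p).2 = foldl (@obs_step _ _ D) z.2 (labw C (run_word p)).
Proof.
elim: p z => [|[ev z'] p IH] z // /andP [ht hr].
rewrite run_end_cons (IH _ hr) labw_cons.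
move: ht; case: ev => [[[a|]|] [[b|]|]] //=.
- by case/and3P => /eqP [<-] _ /eqP ->.
- by case/andP => _ /eqP ->.
- by rewrite andbF.
Qed.

Lemma P2 (p : seq (_ * st C)) (z : st C) : is_run z p ->
  exists pS : seq (E * st S), is_run (A:=S) z.1 pS /\ run_end (A:=S) z.1 pS = (run_end z p).1 /\
    labw S (run_word pS) = labw C (run_word p).
Proof.
elim: p z => [|[ev z'] p IH] z; first by move=> _; exists [::].
move=> /andP [ht hr].
have [pS [h1 [h2 h3]]] := IH _ hr.
rewrite run_end_cons labw_cons.
move: ht; case: ev => [[[a|]|] [[b|]|]] //=.
- case/and3P=> /eqP [<-] /existsP [e /andP [he /eqP hl]] _.
  exists ((e, z'.1) :: pS); split; first by rewrite /= he h1.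
  by rewrite run_end_cons h2 labw_cons hl h3.
- case/andP=> /existsP [e /andP [he /eqP hl]] /eqP h.
  exists ((e, z'.1) :: pS); split; first by rewrite /= he h1.
  by rewrite run_end_cons h2 labw_cons hl h3.
- by rewrite andbF.
Qed.

Lemma P3 (pS : seq (E * st S)) (q : st S) (x : st (observer D)) : is_run q pS ->
  exists p : seq (_ * st C), is_run ((q, x) : st C) p /\
    run_end ((q, x) : st C) p = (run_end q pS, foldl (@obs_step _ _ D) x (labw S (run_word pS))) /\
    labw C (run_word p) = labw S (run_word pS).
Proof.
elim: pS q x => [|[e q'] p IH] q x; first by move=> _; exists [::].
move=> /andP [ht hr].
rewrite run_end_cons labw_cons.
case hl: (lab S e) => [a|].
- have [pc [h1 [h2 h3]]] := IH q' (obs_step x a) hr.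
  exists (((Some (Some a), Some (Some a)), (q', obs_step x a)) :: pc).
  split; last by rewrite run_end_cons h2 labw_cons /= h3.
  rewrite /= h1 !eqxx /= !andbT.
  by apply/existsP; exists e; rewrite ht hl eqxx.
- have [pc [h1 [h2 h3]]] := IH q' x hr.
  exists (((Some None, None), (q', x)) :: pc).
  split; last by rewrite run_end_cons h2 labw_cons /= h3.
  rewrite /= h1 !eqxx /= !andbT.
  by apply/existsP; exists e; rewrite ht hl eqxx.
Qed.

End Spec.
Set Implicit Arguments.
Unset Strict Implicit.

Section Obs.
Variables (E Sig : finType) (A : lfsa E Sig).

Lemma ObsF (w : seq Sig) (x : {set st A}) r : r \in foldl (@obs_step _ _ A) x w ->
  exists q (p : seq (E * st A)), q \in x /\ is_run q p /\ labw A (run_word p) = w /\ run_end q p = r.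
Proof.
elim: w x => [|a w IH] x /= hr; first by exists r, [::].
have [q' [p' [hq' [h1 [h2 h3]]]]] := IH _ hr.
move: hq'; rewrite inE => /asboolP [q [ea [q1 [p0 [hq [hl [hrun [hu he]]]]]]]].
exists q, (((ea, q1) :: p0) ++ p'); split => //.
rewrite is_run_cat hrun he h1 run_end_cat he h3 labw_cat labw_cons hl labw_unobs // h2.
by [].
Qed.

Definition uclosed (x : {set st A}) :=
  forall r e r', r \in x -> unobs A e -> trans A r e r' -> r' \in x.

Lemma ObsB (p : seq (E * st A)) (q : st A) (x : {set st A}) : q \in x -> uclosed x -> is_run q p ->
  run_end q p \in foldl (@obs_step _ _ A) x (labw A (run_word p)).
Proof.
elim: p q x => [|[e q'] p IH] q x hq hc // /andP [ht hr].
rewrite run_end_cons labw_cons.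
case hl: (lab A e) => [a|] /=.
- apply: IH hr.
  + rewrite inE; apply/asboolP; exists q, e, q', [::]; split => //.
    by rewrite /= ht.
  + move=> r e' r'; rewrite !inE => /asboolP [q0 [ea [q1 [p0 [hq0 [hl0 [hrun [hu he]]]]]]]] hue ht'.
    apply/asboolP; exists q0, ea, q1, (p0 ++ [:: (e', r')]); split => //.
    split => //. split.
      by rewrite -cat_cons is_run_cat hrun he /= ht'.
    split; first by rewrite /run_word map_cat all_cat hu /= hue.
    by rewrite -cat_cons run_end_cat.
- apply: IH hr => //. apply: hc hq _ ht. by rewrite /unobs hl.
Qed.

Lemma UR_closed (x : {set st A}) : uclosed (UR x).
Proof.
move=> r e r'; rewrite !inE => /asboolP [q0 [p0 [hq0 [hrun [hu he]]]]] hue ht'.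
apply/asboolP; exists q0, (p0 ++ [:: (e, r')]); split => //. split.
  by rewrite is_run_cat hrun he /= ht'.
split; first by rewrite /run_word map_cat all_cat hu /= hue.
by rewrite run_end_cat.
Qed.

Lemma UR_sub (x : {set st A}) (q : st A) : q \in x -> q \in UR x.
Proof. by move=> hq; rewrite inE; apply/asboolP; exists q, [::]. Qed.

Lemma UR_inv (x : {set st A}) (r : st A) : r \in UR x -> exists q (p : seq (E * st A)), q \in x /\ is_run q p /\
  labw A (run_word p) = [::] /\ run_end q p = r.
Proof.
rewrite inE => /asboolP [q [p [hq [hr [hu he]]]]]; exists q, p; split => //.
by rewrite labw_unobs.
Qed.

End Obs.
Set Implicit Arguments.
Unset Strict Implicit.

Section DS.
Variables (E Sig : finType) (S : lfsa E Sig) (QS : {set st S}).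
Local Notation D := (S_dss QS).

Lemma D_nonsecret (r : st D) : val r \notin QS.
Proof.
have := valP r; rewrite inE => /asboolP [q0 [p [_ [_ [ha he]]]]].
move/allP: ha; apply; rewrite -he /run_end /run_states.
exact: mem_last.
Qed.

Lemma fromD (pD : seq (E * st D)) (q : st D) : is_run q pD ->
  exists p : seq (E * st S), is_run (val q) p /\ run_end (val q) p = val (run_end q pD) /\
    labw S (run_word p) = labw D (run_word pD) /\ all (fun r => r \notin QS) (map snd p).
Proof.
elim: pD q => [|[e q'] pD IH] q; first by move=> _; exists [::].
move=> /andP [ht hr].
have [p [h1 [h2 [h3 h4]]]] := IH _ hr.
exists ((e, val q') :: p); split; first by apply/andP; split.
split; first by rewrite run_end_cons h2.
split; first by rewrite !labw_cons h3.
by rewrite /= h4 D_nonsecret.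
Qed.

Lemma toD (p : seq (E * st S)) (q : st S) (hq : q \in dss_acc QS) :
  is_run q p -> all (fun r => r \notin QS) (map snd p) ->
  exists pD : seq (E * st D), is_run (Sub q hq : st D) pD /\
    val (run_end (Sub q hq : st D) pD) = run_end q p /\
    labw D (run_word pD) = labw S (run_word p).
Proof.
elim: p q hq => [|[e q'] p IH] q hq; first by move=> _ _; exists [::].
move=> /andP [ht hr] /andP [hq'n ha].
have hq' : q' \in dss_acc QS.
  move: (hq); rewrite inE => /asboolP [q0 [p0 [h0 [h1 [h2 h3]]]]].
  rewrite inE; apply/asboolP; exists q0, (p0 ++ [:: (e, q')]); split => //.
  split; first by rewrite is_run_cat h1 h3 /= ht.
  split; last by rewrite run_end_cat h3.
  by rewrite /run_states map_cat -cat_cons all_cat h2 /= hq'n.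
have [pD [h1 [h2 h3]]] := IH q' hq' hr ha.
exists ((e, Sub q' hq') :: pD); split; first by apply/andP; split.
split; first by rewrite run_end_cons h2.
by rewrite !labw_cons h3.
Qed.

End DS.

Unset Implicit Arguments.
Set Strict Implicit.

Theorem theorem11 (E Sig : finType) (S : lfsa E Sig) (QS : {set st S})
    (K : nat) (hK : 0 < K) :
  strongly_K_step_opaque QS K <->
  (forall z : st (CC (S_eps S) (observer (S_dss QS))),
     reachable z -> z.1 \in QS ->
     z.2 != set0 /\
     (forall p, is_run z p ->
        size (labw (CC (S_eps S) (observer (S_dss QS))) (run_word p)) <= K ->
        (run_end z p).2 != set0)).
Proof.
split.
- move=> hop z [[q0 x0] [pc [hz0 [hrc hze]]]] hzq.
  move: hz0 => /setXP [h01 /set1P h02].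
  have key : forall p, is_run z p ->
      size (labw (CC (S_eps S) (observer (S_dss QS))) (run_word p)) <= K ->
      (run_end z p).2 != set0.
    move=> p hp hs.
    have [pS1 [a1 [b1 c1]]] := P2 hrc.
    rewrite hze /= in b1.
    have [pS2 [a2 [b2 c2]]] := P2 hp.
    have hsec : run_end (A:=S) q0 pS1 \in QS by rewrite b1.
    have hr2' : is_run (A:=S) (run_end (A:=S) q0 pS1) pS2 by rewrite b1.
    have hs' : size (labw S (run_word pS2)) <= K by rewrite c2.
    have [q0' [p1' [p2' [hi [hr1 [hr2 [hall [hl1 hl2]]]]]]]] :=
      hop q0 pS1 pS2 h01 a1 hsec hr2' hs'.
    move: hall; rewrite /run_states /= => /andP [hq0n hall].
    have hq : q0' \in dss_acc QS.
      rewrite inE; apply/asboolP; exists q0', [::]; split => //.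
      by rewrite /run_states /= hq0n.
    have hrun : is_run q0' (p1' ++ p2') by rewrite is_run_cat hr1.
    have hall' : all (fun r => r \notin QS) (map snd (p1' ++ p2')) by rewrite map_cat.
    have [pD [d1 [d2 d3]]] := toD hq hrun hall'.
    have hin : (Sub q0' hq : st (S_dss QS)) \in UR (init (S_dss QS)).
      by apply: UR_sub; rewrite inE /=.
    have := ObsB hin (@UR_closed _ _ _ _) d1.
    rewrite d3 labw_cat hl1 hl2 c1 c2 => hmem.
    rewrite (P1 hp) -hze (P1 hrc) -foldl_cat /= h02.
    by apply/set0Pn; eexists; exact: hmem.
  split; last exact: key.
  by have := key [::] erefl (leq0n K).
- move=> H q0 p1 p2 h0 hr1 hsec hr2 hs.
  have [pc1 [a1 [b1 c1]]] := P3 (QS:=QS) (UR (init (S_dss QS))) hr1.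
  have hreach : reachable (run_end ((q0, UR (init (S_dss QS))) :
                  st (CC (S_eps S) (observer (S_dss QS)))) pc1).
    exists (q0, UR (init (S_dss QS))), pc1; split => //.
    by apply/setXP; split => //; apply/set11.
  have [pc2 [a2 [b2 c2]]] := P3 (QS:=QS) (foldl (@obs_step _ _ (S_dss QS))
                  (UR (init (S_dss QS))) (labw S (run_word p1))) hr2.
  have [_ Hk] := H _ hreach ltac:(by rewrite b1).
  have := Hk pc2 ltac:(by rewrite b1) ltac:(by rewrite c2).
  rewrite b1 b2 /= -foldl_cat => /set0Pn [r hr].
  have [q [pD [hq [d1 [d2 d3]]]]] := @ObsF _ _ (S_dss QS) _ _ _ hr.
  have [q00 [p00 [hq00 [e1 [e2 e3]]]]] := UR_inv hq.
  have hrun : is_run q00 (p00 ++ pD) by rewrite is_run_cat e1 e3.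
  have [p [f1 [f2 [f3 f4]]]] := fromD hrun.
  rewrite labw_cat e2 d2 /= in f3.
  have [pa [pb [hp [g1 g2]]]] := labw_split f3.
  move: f1 f4; rewrite hp is_run_cat => /andP [ra rb] hall.
  exists (val q00), pa, pb; split; first by move: hq00; rewrite inE.
  do 2 (split => //).
  split; last by [].
  by rewrite -map_cat D_nonsecret.
Qed.
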